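(* For any population, set of $M$ units and budget $K$, the LEA algorithm uses $O\big(M\ln(2M/\delta)/\epsilon\big)$ samples and, with probability at least $1-\delta$, returns an allocation $\mathcal U_{\mathsf{LTK}}$ satisfying $$\frac{V_{\mathcal U_{\mathsf{LTK}}}}{V_{\mathcal U^*}}\ \ge\ 1-\frac{4\gamma\,\theta_K}{\gamma_1+\tau_K\theta_K}\sqrt{\epsilon},$$ where $\theta_K=\Pr_\tau\big[[\tau_K,\tau_K+2\rho]\big]$ and $\gamma_1=\frac1M\sum_{u:\tau(u)>\tau_K+2\rho}\tau(u)$.
   Context: There are $M$ units with pairwise distinct treatment effects $\tau(u)\in[0,1]$ and a budget $K\in\{1,\dots,M\}$; $\tau_K$ is the $K$-th largest value of $\tau(u)$; $\mathcal U^*$ is the set of the $K$ units with the largest $\tau(u)$; for a set $S$ of units $V_S=\sum_{u\in S}\tau(u)$. $\Pr_\tau[S]=|\{u:\tau(u)\in S\}|/M$. An estimation oracle, given $u$ and $\epsilon',\delta'$, returns $\hat\tau(u)$ with $|\hat\tau(u)-\tau(u)|\le\epsilon'$ with probability at least $1-\delta'$ at a cost of $O(\ln(2/\delta')/\epsilon'^2)$ samples. The LEA algorithm: input $M$ units, budget $K$, parameters $\epsilon,\delta,\gamma>0$ with $\gamma=\Theta(1)$; set $\rho=\gamma\sqrt\epsilon$; obtain a $(\rho,\delta/M)$-accurate estimate $\hat\tau(u)$ of each unit; output the $K$ units with the largest $\hat\tau(u)$. *)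

(* Defs.v *)
From HB Require Import structures.
From mathcomp Require Import all_boot all_order all_algebra.
From mathcomp Require Import all_classical all_reals all_analysis.
Set Implicit Arguments. Unset Strict Implicit. Unset Printing Implicit Defensive.
Import Order.TTheory GRing.Theory Num.Theory.
Local Open Scope ring_scope.

Section LEA.
Variables (R : realType) (M : nat).

Definition kth_largest (tau : 'I_M -> R) (K : nat) : R :=
  nth 0 (sort (fun x y : R => y <= x) [seq tau u | u <- enum 'I_M]) K.-1.

(* U^* : the K units with largest tau (tau injective) *)
Definition Ustar (tau : 'I_M -> R) (K : nat) : {set 'I_M} :=
  [set u | kth_largest tau K <= tau u].

Definition Vset (tau : 'I_M -> R) (S : {set 'I_M}) : R := \sum_(u in S) tau u.

Definition Pr_tau (tau : 'I_M -> R) (S : R -> bool) : R :=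
  #|[set u | S (tau u)]|%:R / M%:R.

Definition thetaK (tau : 'I_M -> R) (K : nat) (rho : R) : R :=
  Pr_tau tau (fun x => (kth_largest tau K <= x) && (x <= kth_largest tau K + 2 * rho)).

Definition gamma1 (tau : 'I_M -> R) (K : nat) (rho : R) : R :=
  M%:R^-1 * \sum_(u | kth_largest tau K + 2 * rho < tau u) tau u.

(* S is a possible output of "take the K units with largest f"
   (any tie-breaking rule allowed) *)
Definition topK (f : 'I_M -> R) (K : nat) (S : {set 'I_M}) : Prop :=
  #|S| = K /\ (forall u v, u \in S -> v \notin S -> f v <= f u).

End LEA.

(* Main.v *)
Require Import Defs.
From HB Require Import structures.
From mathcomp Require Import all_boot all_order all_algebra.
From mathcomp Require Import all_classical all_reals all_analysis.
Import Order.TTheory GRing.Theory Num.Theory.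
Local Open Scope ring_scope.
From mathcomp Require Import zify ring lra.

Lemma card_pred_count (M : nat) (p : pred 'I_M) :
  #|[set u | p u]| = count p (enum 'I_M).
Proof. rewrite cardsE cardE -size_filter /enum_mem; congr size; by rewrite [in RHS](@eq_filter _ (mem (ordinal M)) predT) // filter_predT. Qed.

Lemma Ustar_card (R : realType) (M K : nat) (tau : 'I_M -> R) :
  (0 < K)%N -> injective tau -> (#|Ustar tau K| <= K)%N.
Proof.
move=> K0 itau.
rewrite /Ustar card_pred_count.
set t := kth_largest tau K.
rewrite -(count_map tau (fun x => t <= x)).
set s0 := [seq tau u | u <- enum 'I_M].
set s := sort (fun x y : R => y <= x) s0.
have -> : count (fun x => t <= x) s0 = count (fun x => t <= x) s.
  by apply/permP; rewrite perm_sym perm_sort.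
have us : uniq s by rewrite sort_uniq map_inj_uniq ?enum_uniq.
have ss : sorted (fun x y : R => y <= x) s.
  by apply: sort_sorted => x y; rewrite orbC le_total.
have ht : t = nth 0 s K.-1 by [].
clearbody t s; clear s0.
rewrite -(cat_take_drop K s) count_cat.
have -> : count (fun x => t <= x) (drop K s) = 0%N.
  apply/eqP; rewrite -leqn0 leqNgt -has_count; apply/hasPn => x.
  move/(nthP 0) => [j]; rewrite size_drop nth_drop => hj <-.
  have hK : (K.-1 < size s)%N by move: hj K0; rewrite -subn1; move: (size s) => n; lia.
  have hle : nth 0 s (K + j) <= nth 0 s K.-1.
    apply: (sorted_leq_nth _ _ _ ss).
    - by move=> a b c h1 h2; apply: le_trans h2 h1.
    - by move=> a.
    - by rewrite inE.
    - by rewrite inE; move: hj; move: (size s) => n; lia.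
    - rewrite -subn1; lia.
  have hne : nth 0 s (K + j) != nth 0 s K.-1.
    rewrite nth_uniq //; last by move: hj; move: (size s) => n; lia.
    by move: K0; rewrite -subn1; lia.
  by rewrite ht -ltNge lt_neqAle hne hle.
by rewrite addn0; apply: leq_trans (count_size _ _) _; rewrite size_take; case: ifP => //; lia.
Qed.

Lemma kth_ge0 (R : realType) (M K : nat) (tau : 'I_M -> R) :
  (forall u, 0 <= tau u <= 1) -> 0 <= kth_largest tau K.
Proof.
move=> h; rewrite /kth_largest.
set s := sort _ _.
case: (ltnP K.-1 (size s)) => hK; last by rewrite nth_default.
have := mem_nth 0 hK; rewrite mem_sort => /mapP [u _ ->].
by case/andP: (h u).
Qed.

Lemma kth_in (R : realType) (M K : nat) (tau : 'I_M -> R) :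
  (0 < K)%N -> (K <= M)%N -> exists u, tau u = kth_largest tau K.
Proof.
move=> K0 KM; rewrite /kth_largest.
set s := sort _ _.
have hK : (K.-1 < size s)%N by rewrite size_sort size_map size_enum_ord; lia.
have := mem_nth 0 hK; rewrite mem_sort => /mapP [u _ ->].
by exists u.
Qed.

Lemma det_bound (R : realType) (M K : nat) (tau est : 'I_M -> R)
  (rho : R) (S : {set 'I_M}) :
  (0 < K)%N -> (K <= M)%N -> (#|Ustar tau K| <= K)%N -> 
  0 <= kth_largest tau K ->
  (forall u, 0 <= tau u <= 1) -> 0 < rho ->
  (forall u, `|est u - tau u| <= rho) ->
  topK est K S ->
  let t := kth_largest tau K in
  let U := Ustar tau K in
  let X := U :\: S in
  let Y := S :\: U in
  Vset tau S = \sum_(u in S :&: U) tau u + \sum_(u in Y) tau u /\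
  Vset tau U = \sum_(u in S :&: U) tau u + \sum_(u in X) tau u /\
  ((0 < #|X|)%N ->
     0 < t /\
     (#|X| <= #|[set u | ((t <= tau u) && (tau u <= t + 2 * rho))%R]|)%N /\
     \sum_(u in X) tau u - \sum_(u in Y) tau u <= 2 * rho * #|X|%:R).
Proof.
move=> K0 KM UK t0 h01 rho0 hest [cS hS] t U X Y.
have e1 : Vset tau S = \sum_(u in S :&: U) tau u + \sum_(u in Y) tau u.
  by rewrite /Vset (big_setID U).
have e2 : Vset tau U = \sum_(u in S :&: U) tau u + \sum_(u in X) tau u.
  by rewrite /Vset (big_setID S) finset.setIC.
split => //; split => //.
move=> kpos.
have hXY : (#|X| <= #|Y|)%N.
  have := cardsID S U; have := cardsID U S; rewrite finset.setIC.
  rewrite -/X -/Y; move: UK cS; rewrite -/U; lia.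
have lpos : (0 < #|Y|)%N by lia.
have key : forall u v, u \in X -> v \in Y -> tau u <= tau v + 2 * rho.
  move=> u v; rewrite !inE => /andP [uS _] /andP [_ vS].
  have := hS v u vS uS.
  have := hest u; have := hest v; rewrite !ler_norml.
  move=> /andP [a1 a2] /andP [b1 b2]; lra.
move: (lpos); rewrite card_gt0 => /set0Pn [v0 v0Y].
have tv0 : tau v0 < t.
  by move: v0Y; rewrite !inE -ltNge => /andP [].
split.
  by case/andP: (h01 v0) => a _; apply: le_lt_trans a tv0.
split.
  apply: subset_leq_card; apply/fintype.subsetP => u uX; rewrite inE.
  have := key u v0 uX v0Y.
  move: uX; rewrite !inE => /andP [_ ->] /=.
  move=> h; lra.
set A := \sum_(u in X) tau u.
set B := \sum_(u in Y) tau u.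
have B0 : 0 <= B by apply: sumr_ge0 => i _; case/andP: (h01 i).
have hL : \sum_(u in X) \sum_(v in Y) tau u = A * #|Y|%:R.
  rewrite /A mulr_suml; apply: eq_bigr => u _.
  by rewrite sumr_const mulr_natr.
have hR : \sum_(u in X) \sum_(v in Y) (tau v + 2 * rho) = (B + 2 * rho * #|Y|%:R) * #|X|%:R.
  rewrite sumr_const mulr_natr; congr (_ *+ _).
  by rewrite big_split /= sumr_const mulr_natr.
have dbl : A * #|Y|%:R <= (B + 2 * rho * #|Y|%:R) * #|X|%:R.
  rewrite -hL -hR.
  by apply: ler_sum => u uX; apply: ler_sum => v vY; exact: key.
have hXYr : (#|X|%:R : R) <= #|Y|%:R by rewrite ler_nat.
have lr : (0 : R) < #|Y|%:R by rewrite ltr0n.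
have kr : (0 : R) <= #|X|%:R by rewrite ler0n.
set k := (#|X|%:R : R) in dbl hXYr kr *.
set l := (#|Y|%:R : R) in dbl hXYr lr *.
have : (A - B - 2 * rho * k) * l <= 0.
  have -> : (A - B - 2 * rho * k) * l = A * l - (B + 2 * rho * l) * k + B * (k - l) by ring.
  have : B * (k - l) <= 0 by apply: mulr_ge0_le0 => //; lra.
  lra.
rewrite pmulr_lle0 // => h; lra.
Qed.

Lemma det_final (R : realType) (M K : nat) (tau f : 'I_M -> R) (eps gamma : R)
  (S : {set 'I_M}) :
  (0 < K)%N -> (K <= M)%N -> injective tau -> (forall u, 0 <= tau u <= 1) ->
  0 < eps -> 0 < gamma ->
  (forall u, `|f u - tau u| <= gamma * Num.sqrt eps) -> topK f K S ->
  Vset tau S >=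
      (1 - 4 * gamma * thetaK tau K (gamma * Num.sqrt eps)
             / (gamma1 tau K (gamma * Num.sqrt eps) + kth_largest tau K * thetaK tau K (gamma * Num.sqrt eps))
           * Num.sqrt eps) * Vset tau (Ustar tau K).
Proof.
move=> K0 KM itau h01 eps0 gam0 hest hS.
set rho := gamma * Num.sqrt eps.
have rho0 : 0 < rho by rewrite /rho mulr_gt0 // sqrtr_gt0.
have UK := @Ustar_card R M K tau K0 itau.
have t0 := @kth_ge0 R M K tau h01.
have [e1 [e2 hk]] := @det_bound R M K tau f rho S K0 KM UK t0 h01 rho0 hest hS.
move: e1 e2 hk.
set t := kth_largest tau K.
set U := Ustar tau K.
set X := U :\: S.
set Y := S :\: U.
set C0 := \sum_(u in S :&: U) tau u.
set A := \sum_(u in X) tau u.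
set B := \sum_(u in Y) tau u.
set T := [set u | ((t <= tau u) && (tau u <= t + 2 * rho))%R].
move=> -> -> hk.
set th := thetaK tau K rho.
set g1 := gamma1 tau K rho.
have M0 : (0 < M)%N by lia.
have Mr0 : (0 : R) < M%:R by rewrite ltr0n.
have thE : th = #|T|%:R / M%:R by [].
have th0 : 0 <= th by rewrite thE divr_ge0 // ler0n.
have sH0 : 0 <= \sum_(u | t + 2 * rho < tau u) tau u.
  by apply: sumr_ge0 => i _; case/andP: (h01 i).
have g1E : g1 = M%:R^-1 * \sum_(u | t + 2 * rho < tau u) tau u by [].
have g10 : 0 <= g1 by rewrite g1E mulr_ge0 // invr_ge0 ler0n.
have D0 : 0 <= g1 + t * th by rewrite addr_ge0 // mulr_ge0.
have A0 : 0 <= A by apply: sumr_ge0 => i _; case/andP: (h01 i).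
have B0 : 0 <= B by apply: sumr_ge0 => i _; case/andP: (h01 i).
have C00 : 0 <= C0 by apply: sumr_ge0 => i _; case/andP: (h01 i).
case: (posnP #|X|) => [k0 | kpos].
  move/eqP: k0; rewrite cards_eq0 => /eqP X0.
  have -> : A = 0 by rewrite /A X0 big_set0.
  have c0 : 0 <= 4 * gamma * th / (g1 + t * th) * Num.sqrt eps.
    by rewrite mulr_ge0 ?sqrtr_ge0 // divr_ge0 // mulr_ge0 // mulr_ge0 // ltW.
  set c := 4 * gamma * th / (g1 + t * th) * Num.sqrt eps in c0 *.
  rewrite addr0 mulrBl mul1r.
  have : 0 <= c * C0 by rewrite mulr_ge0.
  lra.
have [tpos [km hdiff]] := hk kpos.
have hV : \sum_(u | t + 2 * rho < tau u) tau u + t * #|T|%:R <= C0 + A.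
  have -> : C0 + A = \sum_(u in U) tau u.
    by rewrite /C0 /A /X [in RHS](big_setID S) /= finset.setIC.
  rewrite (big_setID [set u | t + 2 * rho < tau u]).
  have -> : U :&: [set u | t + 2 * rho < tau u] = [set u | t + 2 * rho < tau u].
    apply/setP => u; rewrite /U /Ustar !inE.
    case h: (t + 2 * rho < tau u); rewrite ?andbF ?andbT //.
    apply: le_trans (ltW h); rewrite -/t; lra.
  have -> : U :\: [set u | t + 2 * rho < tau u] = T.
    apply/setP => u; rewrite /U /Ustar !inE -leNgt andbC.
    by [].
  rewrite big_set; apply: lerD; first by [].
  have : t * #|T|%:R <= \sum_(u in T) tau u.
    rewrite mulr_natr -sumr_const; apply: ler_sum => u; rewrite inE => /andP [] //.
  by move=> h; exact: h.
set m := (#|T|%:R : R) in thE hV *.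
have kr1 : (1 : R) <= #|X|%:R by rewrite ler1n.
have kmr : (#|X|%:R : R) <= m by rewrite ler_nat.
have thM : th * M%:R = m by rewrite thE divfK // gt_eqF.
have thpos : 0 < th by rewrite thE divr_gt0 //; lra.
have Dpos : 0 < g1 + t * th by rewrite ltr_pwDr // mulr_gt0.
set D := g1 + t * th in D0 Dpos *.
set V := C0 + A in hV *.
have hDM : M%:R * D <= V.
  have ea : M%:R * g1 = \sum_(u | t + 2 * rho < tau u) tau u.
    by rewrite g1E mulrA mulfV ?gt_eqF // mul1r.
  have eb : M%:R * (t * th) = t * m by rewrite mulrCA (mulrC _ th) thM.
  by rewrite /D mulrDr ea eb.
set q := V / D.
have Mq : M%:R <= q by rewrite /q ler_pdivlMr // mulrC.
have -> : (1 - 4 * gamma * th / D * Num.sqrt eps) * V = V - 4 * (rho * (th * q)).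
  by rewrite /q /rho; field; rewrite gt_eqF.
have h1 : rho * #|X|%:R <= rho * m by rewrite ler_wpM2l // ltW.
have h2 : rho * (th * M%:R) <= rho * (th * q).
  by apply: ler_wpM2l; [exact: ltW | apply: ler_wpM2l].
have h4 : 0 <= rho * (th * q).
  apply: mulr_ge0; first exact: ltW.
  apply: mulr_ge0 => //; apply: divr_ge0; last exact: ltW.
  rewrite /V; lra.
rewrite thM in h2.
rewrite /V; lra.
Qed.

Local Open Scope classical_set_scope.

Lemma inter_bound d (T : measurableType d) (R : realType) (P : probability T R)
  (X Y : set T) (a b : R) : measurable X -> measurable Y ->
  (a%:E <= P X)%E -> (b%:E <= P Y)%E -> ((a + b - 1)%:E <= P (X `&` Y))%E.
Proof.
move=> mX mY hX hY.
have mXY : measurable (X `&` Y) by exact: measurableI.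
have hC : (P (~` (X `&` Y)) <= P (~` X) + P (~` Y))%E.
  by rewrite setCI; apply: measureU2; apply: measurableC.
have ex := esym (fineK (fin_num_measure P _ mX)).
have ey := esym (fineK (fin_num_measure P _ mY)).
have exy := esym (fineK (fin_num_measure P _ mXY)).
move: hX hY hC; rewrite !probability_setC // ex ey exy.
move: (fine (P X)) (fine (P Y)) (fine (P (X `&` Y))) => x y z.
rewrite -!EFinB -EFinD !lee_fin => h1 h2 h3; lra.
Qed.

Lemma bigI_bound d (T : measurableType d) (R : realType) (P : probability T R)
  (I : eqType) (A : I -> set T) (c : R) :
  (forall i, measurable (A i)) -> (forall i, ((1 - c)%:E <= P (A i))%E) ->
  forall s : seq I,
  measurable (\big[setI/setT]_(i <- s) A i) /\
  ((1 - (size s)%:R * c)%:E <= P (\big[setI/setT]_(i <- s) A i))%E /\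
  (forall w, (\big[setI/setT]_(i <- s) A i) w -> forall i, i \in s -> A i w).
Proof.
move=> mA hA; elim => [|i s [ms [hs ws]]].
  rewrite big_nil probability_setT mul0r subr0; split => //; split => //.
split; first by rewrite big_cons; apply: measurableI.
split.
  rewrite big_cons.
  apply: le_trans (@inter_bound _ _ _ P _ _ _ _ (mA i) ms (hA i) hs).
  by rewrite lee_fin /= -addn1 natrD; lra.
move=> w; rewrite big_cons => -[wi ws'] j; rewrite in_cons => /orP [/eqP -> //|js].
exact: ws.
Qed.

Theorem claim11
  (R : realType) (M K : nat) (tau : 'I_M -> R)
  (eps delta gamma : R)
  (* oracle cost model: O(ln(2/delta')/eps'^2) samples with constant C *)
  (C : R) (cost : R -> R -> R)
  (d : measure_display) (Omega : measurableType d) (P : probability Omega R)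
  (est : Omega -> 'I_M -> R) :
  (0 < K)%N -> (K <= M)%N ->
  injective tau -> (forall u, 0 <= tau u <= 1) ->
  0 < eps -> 0 < delta -> 0 < gamma -> 0 < C ->
  (forall e d', 0 < e -> 0 < d' -> cost e d' <= C * ln (2 / d') / e ^+ 2) ->
  let rho := gamma * Num.sqrt eps in
  (* each estimate is (rho, delta/M)-accurate *)
  (forall u : 'I_M, exists A : set Omega, measurable A /\
      A `<=` [set w | `|est w u - tau u| <= rho] /\
      ((1 - delta / M%:R)%:E <= P A)%E) ->
  (* sample complexity *)
  \sum_(u : 'I_M) cost rho (delta / M%:R)
     <= (C / gamma ^+ 2) * (M%:R * ln (2 * M%:R / delta) / eps)
  /\
  (* approximation guarantee with probability >= 1 - delta *)
  exists A : set Omega, measurable A /\ ((1 - delta)%:E <= P A)%E /\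
    forall w, A w -> forall S : {set 'I_M}, topK (est w) K S ->
      Vset tau S >=
      (1 - 4 * gamma * thetaK tau K rho
             / (gamma1 tau K rho + kth_largest tau K * thetaK tau K rho)
           * Num.sqrt eps) * Vset tau (Ustar tau K).
Proof.
move=> K0 KM itau h01 eps0 del0 gam0 C0 hcost rho hA.
have M0 : (0 < M)%N by lia.
have Mr0 : (0 : R) < M%:R by rewrite ltr0n.
have rho0 : 0 < rho by rewrite /rho mulr_gt0 // sqrtr_gt0.
split.
  have hc : forall u : 'I_M, true -> cost rho (delta / M%:R) <=
      C * ln (2 * M%:R / delta) / (gamma ^+ 2 * eps).
    move=> _ _.
    have := hcost rho (delta / M%:R) rho0 (divr_gt0 del0 Mr0).
    have -> : 2 / (delta / M%:R) = 2 * M%:R / delta.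
      by field; rewrite !gt_eqF.
    have -> : rho ^+ 2 = gamma ^+ 2 * eps by rewrite /rho exprMn sqr_sqrtr // ltW.
    done.
  apply: le_trans (ler_sum _ hc) _.
  rewrite sumr_const card_ord -mulr_natr le_eqVlt; apply/orP; left; apply/eqP.
  by field; rewrite !gt_eqF.
have [Af hAf] := boolp.choice hA.
have mA : forall u, measurable (Af u) by move=> u; case: (hAf u).
have pA : forall u, ((1 - delta / M%:R)%:E <= P (Af u))%E by move=> u; case: (hAf u) => _ [].
have sA : forall u, Af u `<=` [set w | `|est w u - tau u| <= rho] by move=> u; case: (hAf u) => _ [].
have [mB [pB wB]] := @bigI_bound d Omega R P _ Af (delta / M%:R) mA pA (enum 'I_M).
exists (\big[setI/setT]_(i <- enum 'I_M) Af i); split => //; split.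
  by move: pB; rewrite size_enum_ord mulrC divfK // gt_eqF.
move=> w Bw S hS.
apply: det_final => //.
move=> u; exact: (sA u w (wB w Bw u (mem_enum _ _))).
exact: hS.
Qed.
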